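(* Let $h\ge 0$ and $0\le k\le h$. The generating function $f_k^{(h)}(z)=\sum_{n\ge 0} a^{(h)}_{n,k}z^n$ satisfies $$f_k^{(h)}(z)=z^k\,\frac{d_{h-k}}{d_{h+1}},$$ where $a^{(h)}_{n,k}$ is the number of partial ternary paths of length $n$ ending at level $k$ all of whose ordinates are at most $h$, and the polynomials $d_j=d_j(z)$ are defined by $\sum_{j\ge 0}d_jX^j=\dfrac{1}{1-X+z^3X^3}$ (equivalently $d_0=d_1=d_2=1$, $d_j=d_{j-1}-z^3d_{j-3}$ for $j\ge 3$).
   Context: A partial ternary path of length $n$ is a lattice path $(0,c_0),\dots,(n,c_n)$ with $c_0=0$, steps $(1,1)$ or $(1,-2)$, and all $c_j\ge 0$; it ends at level $c_n$. *)

(* Defs.v *)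
From HB Require Import structures.
From mathcomp Require Import all_boot all_order all_algebra.
Set Implicit Arguments. Unset Strict Implicit. Unset Printing Implicit Defensive.
Import Order.TTheory GRing.Theory Num.Theory.
Local Open Scope ring_scope.

(* A step is a boolean: true = (1,1), false = (1,-2). *)
Definition stepv (b : bool) : int := if b then 1 else -2.

Definition lv (s : seq bool) (i : nat) : int :=
  \sum_(j < i) stepv (nth false s j).

Definition a_count (h n k : nat) : nat :=
  #|[set t : n.-tuple bool |
      [forall i : 'I_n.+1, (0 <= lv t i) && (lv t i <= h%:Z)]
      && (lv t n == k%:Z)]|.

(* dtrip j = (d_j, d_{j+1}, d_{j+2}) *)
Fixpoint dtrip (j : nat) : {poly int} * {poly int} * {poly int} :=
  match j with
  | 0 => (1, 1, 1)
  | j'.+1 => let: (x, y, w) := dtrip j' in (y, w, w - 'X^3 * x)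
  end.
Definition d (j : nat) : {poly int} := (dtrip j).1.1.

Definition fps := nat -> int.
Definition fps_mul (f g : fps) : fps :=
  fun n => \sum_(i < n.+1) f i * g (n - i)%N.
Definition fps_of_poly (p : {poly int}) : fps := fun n => p`_n.

Definition f_gen (h k : nat) : fps := fun n => (a_count h n k)%:Z.

(* Main.v *)
Require Import Defs.
From HB Require Import structures.
From mathcomp Require Import all_boot all_order all_algebra.
From Stdlib Require Import FunctionalExtensionality.
Import Order.TTheory GRing.Theory Num.Theory.
Local Open Scope ring_scope.

Lemma card_count (T : finType) (P : pred T) : #|[set t | P t]| = count P (enum T).
Proof.
rewrite cardsE cardE /enum_mem size_filter.
by rewrite [in RHS](eq_filter (a2 := predT)) // filter_predT.
Qed.

Fixpoint allseq (n : nat) : seq (seq bool) :=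
  if n is n'.+1 then [seq rcons s b | s <- allseq n', b <- [:: true; false]]
  else [:: [::]].

Lemma allseqS n : allseq n.+1 = [seq rcons s b | s <- allseq n, b <- [:: true; false]].
Proof. by []. Qed.

Lemma allseq_uniq n : uniq (allseq n).
Proof.
elim: n => [//|n IH]; rewrite allseqS; apply: allpairs_uniq => //.
by move=> [s1 b1] [s2 b2] _ _ /= /rcons_inj.
Qed.

Lemma mem_allseq n s : (s \in allseq n) = (size s == n).
Proof.
elim: n s => [|n IH] s; first by case: s.
rewrite allseqS.
apply/allpairsP/idP => [[[s' b] /= [Hs _ ->]]|].
  by rewrite size_rcons eqSS -IH.
case/lastP: s => [//|s b]; rewrite size_rcons eqSS => Hs.
by exists (s, b) => /=; split => //; [rewrite IH | case: b].
Qed.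

Lemma count_allseqS n (P : pred (seq bool)) :
  count P (allseq n.+1) =
  (count (fun s => P (rcons s true)) (allseq n) +
   count (fun s => P (rcons s false)) (allseq n))%N.
Proof.
rewrite allseqS; elim: (allseq n) => [//|s l IH].
by rewrite allpairs_cons count_cat IH /= !addn0 addnACA.
Qed.

Lemma card_tuple_count n (P : pred (seq bool)) :
  #|[set t : n.-tuple bool | P t]| = count P (allseq n).
Proof.
rewrite card_count -(count_map val P); apply/permP/uniq_perm.
- by rewrite map_inj_uniq ?enum_uniq //; apply: val_inj.
- exact: allseq_uniq.
move=> s; rewrite mem_allseq; apply/mapP/idP => [[t _ ->]|/eqP Hs].
  by rewrite size_tuple.
by exists (Tuple (introT eqP Hs)); rewrite ?mem_enum.
Qed.

Definition valid (h : nat) (s : seq bool) :=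
  all (fun i => (0 <= lv s i) && (lv s i <= h%:Z)) (iota 0 (size s).+1).
Definition Q h (c : int) s := valid h s && (lv s (size s) == c).

Lemma lv_rcons s b i : (i <= size s)%N -> lv (rcons s b) i = lv s i.
Proof.
move=> hi; apply: eq_bigr => j _; rewrite nth_rcons.
by rewrite (leq_trans (ltn_ord j) hi).
Qed.

Lemma lv_rcons_last s b : lv (rcons s b) (size s).+1 = lv s (size s) + stepv b.
Proof.
rewrite /lv big_ord_recr /= nth_rcons ltnn eqxx; congr (_ + _).
by apply: eq_bigr => j _; rewrite nth_rcons ltn_ord.
Qed.

Lemma valid_rcons h s b : valid h (rcons s b) =
  valid h s && ((0 <= lv s (size s) + stepv b) && (lv s (size s) + stepv b <= h%:Z)).
Proof.
rewrite /valid size_rcons -addn1 iotaD all_cat add0n; congr (_ && _).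
  apply: eq_in_all => i; rewrite mem_iota add0n => /andP[_ hi].
  by rewrite lv_rcons.
by rewrite /= andbT lv_rcons_last.
Qed.

Lemma valid_last h s : valid h s -> (0 <= lv s (size s)) && (lv s (size s) <= h%:Z).
Proof. by move/allP; apply; rewrite mem_iota add0n ltnSn. Qed.

Lemma a_count_eq h n k : a_count h n k = count (Q h k%:Z) (allseq n).
Proof.
rewrite /a_count -card_tuple_count; apply: eq_card => t; rewrite !inE /Q size_tuple.
congr (_ && _); rewrite /valid size_tuple.
apply/forallP/allP => [H i|H i].
  by rewrite mem_iota add0n => /andP[_ hi]; exact: (H (Ordinal hi)).
by apply: H; rewrite mem_iota add0n ltn_ord.
Qed.

Lemma cz0 h c : count (Q h c) (allseq 0) = (c == 0).
Proof. by rewrite /= /Q /valid /= /lv big_ord0 eq_sym; case: (c == 0). Qed.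

Lemma cz_out h n c : ~~ ((0 <= c) && (c <= h%:Z)) -> count (Q h c) (allseq n) = 0%N.
Proof.
move=> hc; rewrite (eq_count (a2 := pred0)) ?count_pred0 // => s /=.
apply/negP => /andP[/valid_last hv /eqP hl]; by rewrite -hl hv in hc.
Qed.

Lemma shift_eq h (L c x : int) : (0 <= c) && (c <= h%:Z) ->
  ((0 <= L + x) && (L + x <= h%:Z)) && (L + x == c) = (L == c - x).
Proof.
move=> hc; apply/andP/eqP => [[_ /eqP <-]|->]; first by rewrite addrK.
by rewrite subrK eqxx hc.
Qed.

Lemma czS h n c : (0 <= c) && (c <= h%:Z) ->
  count (Q h c) (allseq n.+1) =
  (count (Q h (c - 1)) (allseq n) + count (Q h (c + 2)) (allseq n))%N.
Proof.
move=> hc; rewrite count_allseqS; congr (_ + _)%N; apply: eq_count => s /=;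
  rewrite /Q valid_rcons size_rcons lv_rcons_last -[in LHS]andbA; congr (_ && _).
- exact: shift_eq.
- by rewrite shift_eq // opprK.
Qed.

Lemma dS3 j : d j.+3 = d j.+2 - 'X^3 * d j.
Proof. rewrite /d /=; by case: (dtrip j) => [[x y] w]. Qed.
Lemma d0 : d 0 = 1. Proof. by []. Qed.
Lemma d1 : d 1 = 1. Proof. by []. Qed.
Lemma d2 : d 2 = 1. Proof. by []. Qed.

Lemma dstep j : d j = d j.+1 + (if (2 <= j)%N then 'X^3 * d (j - 2)%N else 0).
Proof.
case: j => [|[|j]] /=; rewrite ?addr0 //.
by rewrite dS3 subn2 /= subrK.
Qed.

Section Main.
Variable h : nat.
Let D := d h.+1.
Definition g k := 'X^k * d (h - k)%N.

Lemma g_rec k : (k <= h)%N ->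
  g k = (if k == 0%N then D else 0) + (if k is k'.+1 then 'X * g k' else 0)
        + (if (k + 2 <= h)%N then 'X * g (k + 2)%N else 0).
Proof.
rewrite /g /D; case: k => [|k] hk /=.
  rewrite expr0 !mul1r subn0 add0n addr0 (dstep h).
  by case: ifP => _ //; rewrite mulrA -exprS.
rewrite add0r (dstep (h - k.+1)%N).
have -> : (h - k)%N = (h - k.+1)%N.+1 by rewrite subnSK.
have -> : (2 <= h - k.+1)%N = (k.+1 + 2 <= h)%N.
  by rewrite leq_subRL // addnC.
rewrite mulrDr mulrA -exprS; congr (_ + _).
case: ifP => _; last by rewrite mulr0.
by rewrite mulrA -exprD [RHS]mulrA -exprS subnDA addnS.
Qed.

Definition R (X : nat -> nat -> int) := forall n k, (k <= h)%N ->
  X n k = (if k == 0%N then D`_n else 0) +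
    (if n is n'.+1 then (if k is k'.+1 then X n' k' else 0) +
       (if (k + 2 <= h)%N then X n' (k + 2)%N else 0) else 0).

Lemma R_uniq X Y : R X -> R Y -> forall n k, (k <= h)%N -> X n k = Y n k.
Proof.
move=> RX RY; elim=> [|n IH] k hk; rewrite RX // RY //.
congr (_ + (_ + _)).
  case: k hk => [//|k] hk; apply: IH; exact: ltnW.
by case: ifP => // hk2; apply: IH.
Qed.

Lemma R_g : R (fun n k => (g k)`_n).
Proof.
move=> n k hk /=; rewrite [in LHS](g_rec k hk) !coefD.
rewrite -addrA; congr (_ + _); first by case: (k == 0%N); rewrite ?coef0.
case: n => [|n].
  by case: k hk => [|k] hk; case: ifP => _; rewrite ?coef0 ?coefXM ?addr0.
congr (_ + _); first by case: k hk => [|k] hk; rewrite ?coef0 ?coefXM.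
by case: ifP; rewrite ?coef0 ?coefXM.
Qed.

Definition A n k : int := (a_count h n k)%:Z.

Lemma A0 k : A 0 k = if k == 0%N then 1 else 0.
Proof. by rewrite /A a_count_eq cz0; case: k. Qed.

Lemma AS n k : (k <= h)%N ->
  A n.+1 k = (if k is k'.+1 then A n k' else 0) +
             (if (k + 2 <= h)%N then A n (k + 2)%N else 0).
Proof.
move=> hk; rewrite /A !a_count_eq czS; last by rewrite !lez_nat hk.
rewrite PoszD; congr (_ + _).
  case: k hk => [|k] hk; first by rewrite cz_out.
  have -> : (Posz k.+1 - 1) = Posz k by rewrite -addn1 PoszD addrK.
  by rewrite a_count_eq.
case: ifP => hk2; first by rewrite PoszD.
by rewrite cz_out // -PoszD !lez_nat hk2 andbF.
Qed.

Lemma R_H : R (fun n k => fps_mul (f_gen h k) (fps_of_poly D) n).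
Proof.
move=> n k hk; rewrite /fps_mul /f_gen /fps_of_poly.
case: n => [|n].
  rewrite big_ord1 addr0 -/(A 0 k) A0 subn0.
  by case: (k == 0%N); rewrite ?mul1r ?mul0r.
rewrite big_ord_recl -/(A 0 k) A0 subn0.
have -> : forall (b : bool), (if b then 1 else 0) * D`_n.+1 = (if b then D`_n.+1 else 0).
  by case; rewrite ?mul1r ?mul0r.
congr (_ + _).
under eq_bigr do rewrite lift0 subSS -/(A _.+1 k) (AS _ _ hk) mulrDl.
rewrite big_split /=; congr (_ + _).
  case: k hk => [|k] hk; first by rewrite big1 // => i _; rewrite mul0r.
  by [].
case: ifP => _ //.
by rewrite big1 // => i _; rewrite mul0r.
Qed.

End Main.

Theorem mainTheorem4 (h k : nat) (hk : (k <= h)%N) :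
  fps_mul (f_gen h k) (fps_of_poly (d h.+1)) = fps_of_poly ('X^k * d (h - k)%N).
Proof.
apply: functional_extensionality_dep => n.
exact: (@R_uniq h _ _ (R_H h) (R_g h) n k hk).
Qed.
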